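(* Let $g$ be any classifier (possibly depending on the data) and $\hat\eta$ an estimator of $\eta$ constructed on $\mathcal{D}_n$, and suppose $\mathbb{E}_{X\mid S=s}[\hat\eta(X,s)]>0$ and $\hat{\mathbb{E}}_{X\mid S=s}[\hat\eta(X,s)]>0$ for $s\in\{0,1\}$. Then almost surely $$\Delta(g,\mathbb{P})\le \hat\Delta(g,\mathbb{P})+\sum_{s\in\{0,1\}}\Bigg(2\frac{\mathbb{E}_{X\mid S=s}|\eta(X,s)-\hat\eta(X,s)|}{\mathbb{P}(Y=1\mid S=s)}+\frac{\big|(\mathbb{E}_{X\mid S=s}-\hat{\mathbb{E}}_{X\mid S=s})[\hat\eta(X,s)g(X,s)]\big|}{\mathbb{E}_{X\mid S=s}[\hat\eta(X,s)]}+\frac{\big|(\hat{\mathbb{E}}_{X\mid S=s}-\mathbb{E}_{X\mid S=s})[\hat\eta(X,s)]\big|}{\mathbb{E}_{X\mid S=s}[\hat\eta(X,s)]}\Bigg).$$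
   Context: Let $(X,S,Y)$ be a random tuple in $\mathbb{R}^d\times\{0,1\}\times\{0,1\}$ with joint distribution $\mathbb{P}$, where $\mathbb{P}(S=1)\in(0,1)$ and $\mathbb{P}(Y=1\mid S=s)>0$ for $s\in\{0,1\}$. A classifier is a measurable map $g:\mathbb{R}^d\times\{0,1\}\to\{0,1\}$. The regression function is $\eta(x,s)=\mathbb{P}(Y=1\mid X=x,S=s)$; $\mathbb{E}_{X\mid S=s}$ is expectation w.r.t. the conditional law of $X$ given $S=s$ (over a fresh independent $X$, with data held fixed). Unfairness: $\Delta(g,\mathbb{P})=|\mathbb{P}(g(X,S)=1\mid S=1,Y=1)-\mathbb{P}(g(X,S)=1\mid S=0,Y=1)|$. Data: labeled $\mathcal{D}_n$ i.i.d. from $\mathbb{P}$ and independent unlabeled $\mathcal{D}_N=\{(X_i,S_i)\}$ i.i.d. from the law of $(X,S)$, containing points of both groups; $\hat\eta:\mathbb{R}^d\times\{0,1\}\to[0,1]$ is built from $\mathcal{D}_n$ only; $\hat{\mathbb{E}}_{X\mid S=s}$ is expectation w.r.t. the empirical distribution of $\{X:(X,S)\in\mathcal{D}_N,S=s\}$. Empirical unfairness: $$\hat\Delta(g,\mathbb{P})=\Big|\frac{\hat{\mathbb{E}}_{X\mid S=1}[\hat\eta(X,1)g(X,1)]}{\hat{\mathbb{E}}_{X\mid S=1}[\hat\eta(X,1)]}-\frac{\hat{\mathbb{E}}_{X\mid S=0}[\hat\eta(X,0)g(X,0)]}{\hat{\mathbb{E}}_{X\mid S=0}[\hat\eta(X,0)]}\Big|.$$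 *)

(* Defs.v *)
From Stdlib Require Fin.
From Stdlib Require Import Reals List Bool.
Open Scope R_scope.

Definition pt (d : nat) := Fin.t d -> R.

Definition bounded {T : Type} (f : T -> R) : Prop :=
  exists M, forall t, Rabs (f t) <= M.

(* A probability law on T, represented by its expectation (integration)
   functional on bounded functions: linear, monotone, normalised. *)
Record is_expectation {T : Type} (E : (T -> R) -> R) : Prop := {
  E_lin : forall a b f h, bounded f -> bounded h ->
            E (fun t => a * f t + b * h t) = a * E f + b * E h;
  E_mono : forall f h, bounded f -> bounded h ->
            (forall t, f t <= h t) -> E f <= E h;
  E_one : E (fun _ => 1) = 1 }.

Definition indic (b : bool) : R := if b then 1 else 0.

Definition XYS (d : nat) := (pt d * bool * bool)%type.
Definition getX {d} (z : XYS d) : pt d := fst (fst z).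
Definition getS {d} (z : XYS d) : bool := snd (fst z).
Definition getY {d} (z : XYS d) : bool := snd z.

Definition prob {d} (PE : (XYS d -> R) -> R) (A : XYS d -> bool) : R :=
  PE (fun z => indic (A z)).
Definition condE {d} (PE : (XYS d -> R) -> R) (A : XYS d -> bool)
  (f : XYS d -> R) : R :=
  PE (fun z => f z * indic (A z)) / prob PE A.

Definition EXs {d} (PE : (XYS d -> R) -> R) (s : bool) (h : pt d -> R) : R :=
  condE PE (fun z => Bool.eqb (getS z) s) (fun z => h (getX z)).

(* eta is (a version of) the regression function P(Y=1 | X, S). *)
Definition is_regression {d} (PE : (XYS d -> R) -> R)
  (eta : pt d -> bool -> R) : Prop :=
  (forall x s, 0 <= eta x s <= 1) /\
  forall (s : bool) (h : pt d -> R), bounded h ->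
    PE (fun z => h (getX z) * indic (Bool.eqb (getS z) s) * indic (getY z))
    = PE (fun z => h (getX z) * indic (Bool.eqb (getS z) s) * eta (getX z) s).

Definition pos_rate {d} (PE : (XYS d -> R) -> R) (g : pt d -> bool -> bool)
  (s : bool) : R :=
  condE PE (fun z => Bool.eqb (getS z) s && getY z)
    (fun z => indic (g (getX z) (getS z))).

Definition unfairness {d} (PE : (XYS d -> R) -> R) (g : pt d -> bool -> bool) : R :=
  Rabs (pos_rate PE g true - pos_rate PE g false).

Definition group {d} (DN : list (pt d * bool)) (s : bool) : list (pt d * bool) :=
  filter (fun p => Bool.eqb (snd p) s) DN.
Definition emp_EXs {d} (DN : list (pt d * bool)) (s : bool) (h : pt d -> R) : R :=
  fold_right Rplus 0 (map (fun p => h (fst p)) (group DN s))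
  / INR (length (group DN s)).

Definition emp_unfairness {d} (DN : list (pt d * bool)) (etah : pt d -> bool -> R)
  (g : pt d -> bool -> bool) : R :=
  Rabs (emp_EXs DN true (fun x => etah x true * indic (g x true))
          / emp_EXs DN true (fun x => etah x true)
        - emp_EXs DN false (fun x => etah x false * indic (g x false))
          / emp_EXs DN false (fun x => etah x false)).

Definition bound_term {d} (PE : (XYS d -> R) -> R) (DN : list (pt d * bool))
  (eta etah : pt d -> bool -> R) (g : pt d -> bool -> bool) (s : bool) : R :=
  2 * EXs PE s (fun x => Rabs (eta x s - etah x s))
      / condE PE (fun z => Bool.eqb (getS z) s) (fun z => indic (getY z))
  + Rabs (EXs PE s (fun x => etah x s * indic (g x s))
          - emp_EXs DN s (fun x => etah x s * indic (g x s)))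
      / EXs PE s (fun x => etah x s)
  + Rabs (emp_EXs DN s (fun x => etah x s) - EXs PE s (fun x => etah x s))
      / EXs PE s (fun x => etah x s).

(* Main.v *)
Require Import Defs.
From Stdlib Require Import Reals List Bool.
From Stdlib Require Import Lra Psatz FunctionalExtensionality.
Open Scope R_scope.
Lemma key (a q ah bh aT bt e : R) : 0 < q -> 0 < bh -> 0 < bt ->
  0 <= ah <= bh -> 0 <= aT <= bt -> Rabs (a - ah) <= e -> Rabs (bh - q) <= e ->
  Rabs (a/q - aT/bt) <= 2*e/q + Rabs (ah - aT)/bh + Rabs (bt - bh)/bh.
Proof.
  intros Hq Hbh Hbt [H1 H2] [H3 H4] Ha Hb.
  set (r := ah/bh). set (t := aT/bt).
  assert (Er : r * bh = ah) by (unfold r; field; lra).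
  assert (Et : t * bt = aT) by (unfold t; field; lra).
  assert (0 <= r <= 1) by (split; nra).
  assert (0 <= t <= 1) by (split; nra).
  assert (E1 : a/q - t = (a-ah)/q + r*(bh-q)/q + (ah-aT)/bh + t*(bt-bh)/bh).
  { unfold r, t; field; lra. }
  rewrite E1.
  assert (Rabs ((a-ah)/q) <= e/q).
  { unfold Rdiv; rewrite Rabs_mult, (Rabs_pos_eq (/q)) by (left; apply Rinv_0_lt_compat; lra).
    apply Rmult_le_compat_r; [left; apply Rinv_0_lt_compat; lra | lra]. }
  assert (Rabs (r*(bh-q)/q) <= e/q).
  { unfold Rdiv; rewrite !Rabs_mult, (Rabs_pos_eq (/q)) by (left; apply Rinv_0_lt_compat; lra).
    rewrite (Rabs_pos_eq r) by lra.
    apply Rmult_le_compat_r; [left; apply Rinv_0_lt_compat; lra | ].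
    assert (0 <= Rabs (bh - q)) by apply Rabs_pos. nra. }
  assert (Rabs (t*(bt-bh)/bh) <= Rabs (bt-bh)/bh).
  { unfold Rdiv; rewrite !Rabs_mult, (Rabs_pos_eq (/bh)) by (left; apply Rinv_0_lt_compat; lra).
    rewrite (Rabs_pos_eq t) by lra.
    apply Rmult_le_compat_r; [left; apply Rinv_0_lt_compat; lra | ].
    assert (0 <= Rabs (bt - bh)) by apply Rabs_pos. nra. }
  assert (Rabs ((ah-aT)/bh) = Rabs (ah-aT)/bh).
  { unfold Rdiv; rewrite Rabs_mult, (Rabs_pos_eq (/bh)) by (left; apply Rinv_0_lt_compat; lra). reflexivity. }
  eapply Rle_trans. apply Rabs_triang.
  eapply Rle_trans. apply Rplus_le_compat_r. apply Rabs_triang.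
  eapply Rle_trans. apply Rplus_le_compat_r. apply Rplus_le_compat_r. apply Rabs_triang.
  assert (2*e/q = e/q + e/q) by (field; lra). lra.
Qed.

Lemma inv_ge0 x : 0 <= x -> 0 <= / x.
Proof. intros H. destruct (Req_dec x 0) as [->|N]. rewrite Rinv_0; lra.
left; apply Rinv_0_lt_compat; lra. Qed.

Lemma indic_bd (b : bool) : 0 <= indic b <= 1.
Proof. destruct b; simpl; lra. Qed.

Lemma bd_comp {d} (h : pt d -> R) (b : XYS d -> bool) :
  Defs.bounded h -> Defs.bounded (fun z => h (getX z) * indic (b z)).
Proof.
  intros [M HM]. exists (Rabs M). intro z. rewrite Rabs_mult.
  pose proof (indic_bd (b z)). rewrite (Rabs_pos_eq (indic (b z))) by lra.
  pose proof (HM (getX z)). pose proof (Rle_abs M). pose proof (Rabs_pos (h (getX z))). nra.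
Qed.

Lemma bd01 {T} (f : T -> R) : (forall t, 0 <= f t <= 1) -> Defs.bounded f.
Proof. intros H. exists 1. intro t. specialize (H t). rewrite Rabs_pos_eq; lra. Qed.

Section S.
Context {d : nat} (PE : (XYS d -> R) -> R) (HE : is_expectation PE).

Lemma PE0 : PE (fun _ => 0) = 0.
Proof.
  assert (B : Defs.bounded (fun _ : XYS d => 1)) by (exists 1; intros; rewrite Rabs_R1; lra).
  pose proof (E_lin _ HE 0 0 _ _ B B) as H.
  assert (F : (fun _ : XYS d => 0) = (fun _ : XYS d => 0 * 1 + 0 * 1))
    by (apply functional_extensionality; intros; ring).
  rewrite F, H; ring.
Qed.

Lemma PE_nonneg f : Defs.bounded f -> (forall t, 0 <= f t) -> 0 <= PE f.
Proof.
  intros Bf H. rewrite <- PE0. apply (E_mono _ HE); auto.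
  exists 0; intros; rewrite Rabs_R0; lra.
Qed.

Definition ps (s : bool) := PE (fun z => indic (Bool.eqb (getS z) s)).

Lemma ps_ge0 s : 0 <= ps s.
Proof. apply PE_nonneg. apply bd01; intros; apply indic_bd. intros; apply indic_bd. Qed.

Lemma EXs_lin s a b h1 h2 : Defs.bounded h1 -> Defs.bounded h2 ->
  EXs PE s (fun x => a * h1 x + b * h2 x) = a * EXs PE s h1 + b * EXs PE s h2.
Proof.
  intros B1 B2. unfold EXs, condE.
  replace (fun z : XYS d => (a * h1 (getX z) + b * h2 (getX z)) * indic (Bool.eqb (getS z) s))
    with (fun z : XYS d => a * (h1 (getX z) * indic (Bool.eqb (getS z) s)) + b * (h2 (getX z) * indic (Bool.eqb (getS z) s)))
    by (apply functional_extensionality; intros; ring).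
  rewrite (E_lin _ HE); try apply bd_comp; auto.
  unfold Rdiv; ring.
Qed.

Lemma EXs_mono s h1 h2 : Defs.bounded h1 -> Defs.bounded h2 -> (forall x, h1 x <= h2 x) ->
  EXs PE s h1 <= EXs PE s h2.
Proof.
  intros B1 B2 H. unfold EXs, condE. unfold Rdiv.
  apply Rmult_le_compat_r.
  - apply inv_ge0. apply ps_ge0.
  - apply (E_mono _ HE); try apply bd_comp; auto.
    intro z. pose proof (indic_bd (Bool.eqb (getS z) s)). pose proof (H (getX z)). nra.
Qed.

Lemma EXs_abs s f g : Defs.bounded f -> Defs.bounded g -> (forall x, Rabs (f x) <= g x) ->
  Rabs (EXs PE s f) <= EXs PE s g.
Proof.
  intros Bf Bg H. apply Rabs_le. split.
  - assert (E : EXs PE s (fun x => -1 * g x + 0 * g x) = -1 * EXs PE s g + 0 * EXs PE s g)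
      by (apply EXs_lin; auto).
    replace (- EXs PE s g) with (-1 * EXs PE s g + 0 * EXs PE s g) by ring.
    rewrite <- E. apply EXs_mono; auto.
    + destruct Bg as [M HM]; exists M; intro t. replace (-1 * g t + 0 * g t) with (- g t) by ring.
      rewrite Rabs_Ropp; auto.
    + intro x. specialize (H x). pose proof (Rle_abs (- f x)). rewrite Rabs_Ropp in *. lra.
  - apply EXs_mono; auto. intro x. specialize (H x). pose proof (Rle_abs (f x)). lra.
Qed.

Lemma EXs_nonneg s f : Defs.bounded f -> (forall x, 0 <= f x) -> 0 <= EXs PE s f.
Proof.
  intros B H. unfold EXs, condE, Rdiv. apply Rmult_le_pos.
  - apply PE_nonneg. apply bd_comp; auto.
    intro z. pose proof (indic_bd (Bool.eqb (getS z) s)). pose proof (H (getX z)). nra.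
  - apply inv_ge0. apply ps_ge0.
Qed.

End S.

Lemma sum_mono {A} (l : list A) (f g : A -> R) : (forall x, f x <= g x) ->
  fold_right Rplus 0 (map f l) <= fold_right Rplus 0 (map g l).
Proof. intros H; induction l; simpl; [lra | pose proof (H a); lra]. Qed.

Lemma sum_nonneg {A} (l : list A) (f : A -> R) : (forall x, 0 <= f x) ->
  0 <= fold_right Rplus 0 (map f l).
Proof. intros H; induction l; simpl; [lra | pose proof (H a); lra]. Qed.

Lemma emp_mono {d} (DN : list (pt d * bool)) s h1 h2 : (forall x, h1 x <= h2 x) ->
  emp_EXs DN s h1 <= emp_EXs DN s h2.
Proof.
  intros H. unfold emp_EXs, Rdiv. apply Rmult_le_compat_r.
  - apply inv_ge0, pos_INR.
  - apply sum_mono. intros; apply H.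
Qed.

Lemma emp_nonneg {d} (DN : list (pt d * bool)) s h : (forall x, 0 <= h x) ->
  0 <= emp_EXs DN s h.
Proof.
  intros H. unfold emp_EXs, Rdiv. apply Rmult_le_pos.
  - apply sum_nonneg. intros; apply H.
  - apply inv_ge0, pos_INR.
Qed.

Lemma per_s {d} (PE : (XYS d -> R) -> R) (eta etah : pt d -> bool -> R)
  (g : pt d -> bool -> bool) (DN : list (pt d * bool)) (s : bool) :
  is_expectation PE ->
  0 < condE PE (fun z => Bool.eqb (getS z) s) (fun z => indic (getY z)) ->
  is_regression PE eta ->
  (forall x s, 0 <= etah x s <= 1) ->
  0 < EXs PE s (fun x => etah x s) ->
  0 < emp_EXs DN s (fun x => etah x s) ->
  Rabs (pos_rate PE g s -
        emp_EXs DN s (fun x => etah x s * indic (g x s)) / emp_EXs DN s (fun x => etah x s))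
  <= bound_term PE DN eta etah g s.
Proof.
  intros HE Hq [Heta Hreg] Hh Hbh Hbt.
  set (ind := fun z : XYS d => indic (Bool.eqb (getS z) s)).
  assert (Bg : Defs.bounded (fun x => indic (g x s))) by (apply bd01; intros; apply indic_bd).
  assert (B1 : Defs.bounded (fun _ : pt d => 1)) by (apply bd01; intros; lra).
  assert (Beta : Defs.bounded (fun x => eta x s)) by (apply bd01; intros; apply Heta).
  assert (Bh : Defs.bounded (fun x => etah x s)) by (apply bd01; intros; apply Hh).
  assert (Betag : Defs.bounded (fun x => eta x s * indic (g x s))).
  { apply bd01; intros x; pose proof (Heta x s); pose proof (indic_bd (g x s)); split; nra. }
  assert (Bhg : Defs.bounded (fun x => etah x s * indic (g x s))).
  { apply bd01; intros x; pose proof (Hh x s); pose proof (indic_bd (g x s)); split; nra. }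
  assert (Bdiff : Defs.bounded (fun x => Rabs (eta x s - etah x s))).
  { apply bd01; intros x; pose proof (Hh x s); pose proof (Heta x s); split.
    apply Rabs_pos. apply Rabs_le; lra. }
  assert (ED : PE (fun z => indic (Bool.eqb (getS z) s && getY z)) =
               PE (fun z => eta (getX z) s * ind z)).
  { transitivity (PE (fun z => (fun _ : pt d => 1) (getX z) * indic (Bool.eqb (getS z) s) * indic (getY z))).
    { f_equal; apply functional_extensionality; intro z; destruct (Bool.eqb (getS z) s), (getY z); simpl; ring. }
    pose proof (Hreg s (fun _ => 1) B1) as RR; cbv beta in RR |- *; rewrite RR. f_equal; apply functional_extensionality; intro z; unfold ind; ring. }
  assert (Eq : condE PE (fun z => Bool.eqb (getS z) s) (fun z => indic (getY z)) =
               EXs PE s (fun x => eta x s)).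
  { unfold EXs, condE. f_equal.
    transitivity (PE (fun z => indic (Bool.eqb (getS z) s && getY z))).
    { f_equal; apply functional_extensionality; intro z; destruct (Bool.eqb (getS z) s), (getY z); simpl; ring. }
    exact ED. }
  assert (EN : PE (fun z => indic (g (getX z) (getS z)) * indic (Bool.eqb (getS z) s && getY z)) =
               PE (fun z => (eta (getX z) s * indic (g (getX z) s)) * ind z)).
  { transitivity (PE (fun z => (fun x => indic (g x s)) (getX z) * indic (Bool.eqb (getS z) s) * indic (getY z))).
    { f_equal; apply functional_extensionality; intro z; simpl.
      destruct (getS z) eqn:ES, s, (getY z); simpl; ring. }
    pose proof (Hreg s (fun x => indic (g x s)) Bg) as RR; cbv beta in RR |- *; rewrite RR. f_equal; apply functional_extensionality; intro z; unfold ind; ring. }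
  set (p := PE (fun z => indic (Bool.eqb (getS z) s))).
  assert (Hp : p <> 0).
  { intro H0. unfold condE, prob in Hq. fold p in Hq. rewrite H0, Rdiv_0_r in Hq. lra. }
  assert (Epr : pos_rate PE g s = EXs PE s (fun x => eta x s * indic (g x s)) / EXs PE s (fun x => eta x s)).
  { unfold pos_rate, EXs, condE, prob. fold p. rewrite EN, ED. fold ind.
    assert (Hq' := Hq). rewrite Eq in Hq'.
    assert (EE : EXs PE s (fun x => eta x s) = PE (fun z => eta (getX z) s * ind z) / p) by reflexivity.
    rewrite EE in Hq'.
    assert (PE (fun z => eta (getX z) s * ind z) <> 0).
    { intro H0. rewrite H0 in Hq'. unfold Rdiv in Hq'. rewrite Rmult_0_l in Hq'. lra. }
    unfold ind in *. field; auto. }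
  unfold bound_term. rewrite Epr, Eq. rewrite Eq in Hq.
  apply key; auto.
  - split.
    + apply (EXs_nonneg PE HE); auto.
      intros x; pose proof (Hh x s); pose proof (indic_bd (g x s)); nra.
    + apply (EXs_mono PE HE); auto. intros x; pose proof (Hh x s); pose proof (indic_bd (g x s)); nra.
  - split.
    + apply emp_nonneg. intros x; pose proof (Hh x s); pose proof (indic_bd (g x s)); nra.
    + apply emp_mono. intros x; pose proof (Hh x s); pose proof (indic_bd (g x s)); nra.
  - replace (EXs PE s (fun x => eta x s * indic (g x s)) - EXs PE s (fun x => etah x s * indic (g x s)))
      with (EXs PE s (fun x => 1 * (eta x s * indic (g x s)) + (-1) * (etah x s * indic (g x s)))).
    + apply (EXs_abs PE HE); auto.
      * destruct Betag as [M1 H1], Bhg as [M2 H2]. exists (M1 + M2); intro t.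
        eapply Rle_trans; [apply Rabs_triang|]. assert (A1 : Rabs (-1) = 1) by (rewrite Rabs_left; lra). rewrite (Rabs_mult 1), (Rabs_mult (-1)), Rabs_R1, A1.
        specialize (H1 t); specialize (H2 t). lra.
      * intro x. replace (1 * (eta x s * indic (g x s)) + -1 * (etah x s * indic (g x s)))
          with ((eta x s - etah x s) * indic (g x s)) by ring.
        rewrite Rabs_mult. pose proof (indic_bd (g x s)). rewrite (Rabs_pos_eq (indic _)) by lra.
        pose proof (Rabs_pos (eta x s - etah x s)). nra.
    + rewrite (EXs_lin PE HE); auto. ring.
  - replace (EXs PE s (fun x => etah x s) - EXs PE s (fun x => eta x s))
      with (EXs PE s (fun x => (-1) * eta x s + 1 * etah x s)).
    + apply (EXs_abs PE HE); auto.
      * destruct Beta as [M1 H1], Bh as [M2 H2]. exists (M1 + M2); intro t.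
        eapply Rle_trans; [apply Rabs_triang|]. assert (A1 : Rabs (-1) = 1) by (rewrite Rabs_left; lra). rewrite (Rabs_mult 1), (Rabs_mult (-1)), Rabs_R1, A1.
        specialize (H1 t); specialize (H2 t). lra.
      * intro x. replace (-1 * eta x s + 1 * etah x s) with (- (eta x s - etah x s)) by ring.
        rewrite Rabs_Ropp. lra.
    + rewrite (EXs_lin PE HE); auto. ring.
Qed.

Theorem mainTheorem4 (d : nat) (PE : (XYS d -> R) -> R)
  (eta etah : pt d -> bool -> R) (g : pt d -> bool -> bool)
  (DN : list (pt d * bool)) :
  is_expectation PE ->
  0 < prob PE (fun z => getS z) < 1 ->
  (forall s, 0 < condE PE (fun z => Bool.eqb (getS z) s) (fun z => indic (getY z))) ->
  is_regression PE eta ->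
  (forall x s, 0 <= etah x s <= 1) ->
  (forall s, (0 < length (group DN s))%nat) ->
  (forall s, 0 < EXs PE s (fun x => etah x s)) ->
  (forall s, 0 < emp_EXs DN s (fun x => etah x s)) ->
  unfairness PE g <=
    emp_unfairness DN etah g
    + (bound_term PE DN eta etah g false + bound_term PE DN eta etah g true).
Proof.
  intros HE _ Hq Hreg Hh _ Hbh Hbt.
  pose proof (per_s PE eta etah g DN true HE (Hq true) Hreg Hh (Hbh true) (Hbt true)) as H1.
  pose proof (per_s PE eta etah g DN false HE (Hq false) Hreg Hh (Hbh false) (Hbt false)) as H0.
  unfold unfairness, emp_unfairness.
  set (r1 := pos_rate PE g true) in *. set (r0 := pos_rate PE g false) in *.
  set (e1 := emp_EXs DN true (fun x => etah x true * indic (g x true)) / emp_EXs DN true (fun x => etah x true)) in *.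
  set (e0 := emp_EXs DN false (fun x => etah x false * indic (g x false)) / emp_EXs DN false (fun x => etah x false)) in *.
  replace (r1 - r0) with ((e1 - e0) + ((r1 - e1) - (r0 - e0))) by ring.
  eapply Rle_trans; [apply Rabs_triang|].
  pose proof (Rabs_triang (r1 - e1) (- (r0 - e0))). rewrite Rabs_Ropp in H.
  replace (r1 - e1 + - (r0 - e0)) with (r1 - e1 - (r0 - e0)) in H by ring. lra.
Qed.
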